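(* Let $\mathcal{A}=(Q,\delta,I,F)$ be a complete Büchi automaton, let $p,q\in Q$ with $p\preceq_{\mathit{de}}q$, let $\alpha$ be an infinite word and let $\mathcal{G}_\alpha=(V,E)$ be the run DAG of $\mathcal{A}$ over $\alpha$. Then for all $i\ge0$, if $(p,i)\in V$ and $(q,i)\in V$, then $\mathrm{rank}_\alpha(p,i)\le\lceil\mathrm{rank}_\alpha(q,i)\rceil$.
   Context: A Büchi automaton is $\mathcal{A}=(Q,\delta,I,F)$ over a finite alphabet $\Sigma$, $\delta:Q\times\Sigma\to2^Q$, complete if $\delta(q,a)\ne\emptyset$ always; $n=|Q|$. A run from $q$ on $\alpha=\alpha_0\alpha_1\cdots$ is a state sequence $\rho$ with $\rho_0=q$, $\rho_{i+1}\in\delta(\rho_i,\alpha_i)$. Delayed simulation: in the game from $(p_0,r_0)$, in round $i$ Spoiler picks $p_i\xrightarrow{\alpha_i}p_{i+1}$ and Duplicator answers $r_i\xrightarrow{\alpha_i}r_{i+1}$; a Duplicator strategy is a map $\sigma$ with $\sigma(r,p\xrightarrow{a}p')\in\delta(r,a)$ (no lookahead). Duplicator wins if for all $i$, $p_i\in F$ implies $r_k\in F$ for some $k\ge i$. $p\preceq_{\mathit{de}}r$ iff Duplicator has a winning strategy from $(p,r)$. Run DAG: $\mathcal{G}_\alpha=(V,E)$ with $V\subseteq Q\times\omega$, $(q,i)\in V$ iff some run of $\mathcal{A}$ over $\alpha$ from an initial state has $\rho_i=q$, and $((q,i),(q',i'))\in E$ iff $i'=i+1$ and $q'\in\delta(q,\alpha_i)$.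 A vertex $(p,i)$ is accepting if $p\in F$; it is finite in a subgraph if only finitely many vertices are reachable from it there, and endangered if it cannot reach an accepting vertex there. Ranks: let $\mathcal{G}^0=\mathcal{G}_\alpha$, $j=0$; repeat until fixpoint or for at most $2n+1$ steps: assign rank $j$ to all finite vertices of $\mathcal{G}^j$ and let $\mathcal{G}^{j+1}$ be $\mathcal{G}^j$ without them; assign rank $j+1$ to all endangered vertices of $\mathcal{G}^{j+1}$ and let $\mathcal{G}^{j+2}$ be $\mathcal{G}^{j+1}$ without them; set $j:=j+2$. Vertices never assigned a rank get rank $\omega$. $\mathrm{rank}_\alpha(v)$ denotes the rank of $v$. For $x\in\omega$, $\lceil x\rceil$ is the smallest even number $\ge x$, and $\lceil\omega\rceil=\omega$. *)

(* Defs.v *)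
From mathcomp Require Import all_boot.
Set Implicit Arguments. Unset Strict Implicit. Unset Printing Implicit Defensive.

Record buchi (Q Sigma : finType) := Buchi {
  delta : Q -> Sigma -> {set Q};
  init  : {set Q};
  acc   : {set Q} }.

Section Defs.
Variables (Q Sigma : finType) (A : buchi Q Sigma).

Definition complete : Prop := forall (q : Q) (a : Sigma), delta A q a != set0.

(** Duplicator strategy: sigma r p a p' = answer to Spoiler's move p -a-> p'
    when Duplicator is in r (no lookahead). *)
Definition dup_strategy := Q -> Q -> Sigma -> Q -> Q.

Definition valid_strategy (s : dup_strategy) : Prop :=
  forall r p a p', p' \in delta A p a -> s r p a p' \in delta A r a.

(** Duplicator's states r_0 r_1 ... in the play where Spoiler plays
    ps 0 -w 0-> ps 1 -w 1-> ps 2 ... *)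
Fixpoint dup_play (s : dup_strategy) (r0 : Q) (ps : nat -> Q) (w : nat -> Sigma)
    (k : nat) : Q :=
  match k with
  | 0 => r0
  | k'.+1 => s (dup_play s r0 ps w k') (ps k') (w k') (ps k'.+1)
  end.

Definition delayed_sim (p r : Q) : Prop :=
  exists s : dup_strategy, valid_strategy s /\
    forall (ps : nat -> Q) (w : nat -> Sigma),
      ps 0 = p ->
      (forall i, ps i.+1 \in delta A (ps i) (w i)) ->
      forall i, ps i \in acc A ->
        exists k, i <= k /\ dup_play s r ps w k \in acc A.

Variable alpha : nat -> Sigma.

Definition inV (q : Q) (i : nat) : Prop :=
  exists rho : nat -> Q, rho 0 \in init A /\
    (forall j, rho j.+1 \in delta A (rho j) (alpha j)) /\ rho i = q.

(** A subgraph is given by its vertex set (induced subgraph of G_alpha). *)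
Definition vset := Q -> nat -> Prop.

Definition reach (S : vset) (q : Q) (i : nat) (q' : Q) (j : nat) : Prop :=
  i <= j /\ exists rho : nat -> Q, rho i = q /\ rho j = q' /\
    (forall k, i <= k <= j -> S (rho k) k) /\
    (forall k, i <= k < j -> rho k.+1 \in delta A (rho k) (alpha k)).

Definition finite_in (S : vset) (q : Q) (i : nat) : Prop :=
  S q i /\ exists l : seq (Q * nat),
    forall q' j, reach S q i q' j -> (q', j) \in l.

Definition endangered_in (S : vset) (q : Q) (i : nat) : Prop :=
  S q i /\ ~ exists q' j, reach S q i q' j /\ q' \in acc A.

Fixpoint Gsub (j : nat) : vset :=
  match j with
  | 0 => inV
  | j'.+1 => fun q i => Gsub j' q i /\
       ~ (if odd j' then endangered_in (Gsub j') q i else finite_in (Gsub j') q i)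
  end.

(** Ranks: a vertex gets rank j (j <= 2n, i.e. at most 2n+1 removal steps)
    if it is removed when passing from G^j to G^{j+1}; otherwise omega.
    Rank values: Some j = j, None = omega. *)
Definition is_rank (q : Q) (i : nat) (r : option nat) : Prop :=
  match r with
  | Some j => j < (2 * #|Q|).+1 /\ Gsub j q i /\ ~ Gsub j.+1 q i
  | None => forall j, j < (2 * #|Q|).+1 -> ~ (Gsub j q i /\ ~ Gsub j.+1 q i)
  end.

End Defs.

Definition ceil_even (r : option nat) : option nat :=
  match r with
  | Some x => Some (if odd x then x.+1 else x)
  | None => None
  end.

Definition rank_le (a b : option nat) : Prop :=
  match a, b with
  | _, None => True
  | Some x, Some y => x <= y
  | None, Some _ => False
  end.

(* Main.v *)
Require Import Defs.
From mathcomp Require Import all_boot.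
From mathcomp Require Import zify.
From Stdlib Require Import Classical ClassicalEpsilon.
Set Implicit Arguments. Unset Strict Implicit. Unset Printing Implicit Defensive.

Lemma mkchoice (Q Sigma : finType) (A : buchi Q Sigma) (alpha : nat -> Sigma)
  (P : Q -> nat -> Prop) :
  (forall x k, P x k -> exists y, y \in delta A x (alpha k) /\ P y k.+1) ->
  exists f : Q -> nat -> Q, forall x k, P x k ->
    f x k \in delta A x (alpha k) /\ P (f x k) k.+1.
Proof.
move=> H.
have H' : forall x k, exists y, P x k -> (y \in delta A x (alpha k) /\ P y k.+1).
  move=> x k; case: (classic (P x k)) => Hp.
    by have [y Hy] := H x k Hp; exists y.
  by exists x.
exists (fun x k => proj1_sig (constructive_indefinite_description _ (H' x k))).
move=> x k Pxk; exact: (proj2_sig (constructive_indefinite_description _ (H' x k)) Pxk).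
Qed.

Fixpoint itp (Q : Type) (f : Q -> nat -> Q) (x : Q) (m d : nat) : Q :=
  match d with 0 => x | d'.+1 => f (itp f x m d') (m + d') end.

Definition glue (Q : Type) (rho : nat -> Q) (m : nat) (f : Q -> nat -> Q) (k : nat) : Q :=
  if k <= m then rho k else itp f (rho m) m (k - m).

Lemma glue_le (Q : Type) (rho : nat -> Q) m f k : k <= m -> glue rho m f k = rho k.
Proof. by rewrite /glue => ->. Qed.

Lemma glue_add (Q : Type) (rho : nat -> Q) m f d : glue rho m f (m + d) = itp f (rho m) m d.
Proof.
rewrite /glue; case: d => [|d]; first by rewrite addn0 leqnn.
have -> : (m + d.+1 <= m) = false by lia.
by rewrite addKn.
Qed.

Lemma itp_prop (Q Sigma : finType) (A : buchi Q Sigma) (alpha : nat -> Sigma)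
  (P : Q -> nat -> Prop) f x m :
  P x m -> (forall x k, P x k -> f x k \in delta A x (alpha k) /\ P (f x k) k.+1) ->
  forall d, P (itp f x m d) (m + d).
Proof.
move=> Px Hf; elim=> [|d IH] /=; first by rewrite addn0.
by rewrite addnS; case: (Hf _ _ IH).
Qed.

Lemma glue_P (Q Sigma : finType) (A : buchi Q Sigma) (alpha : nat -> Sigma)
  (P : Q -> nat -> Prop) f rho m :
  P (rho m) m -> (forall x k, P x k -> f x k \in delta A x (alpha k) /\ P (f x k) k.+1) ->
  forall k, m <= k -> P (glue rho m f k) k.
Proof.
move=> Pm Hf k Hk; have -> : k = m + (k - m) by lia.
rewrite glue_add; exact: (itp_prop Pm Hf).
Qed.

Lemma glue_path (Q Sigma : finType) (A : buchi Q Sigma) (alpha : nat -> Sigma)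
  (P : Q -> nat -> Prop) f rho i m :
  (forall k, i <= k < m -> rho k.+1 \in delta A (rho k) (alpha k)) ->
  P (rho m) m -> (forall x k, P x k -> f x k \in delta A x (alpha k) /\ P (f x k) k.+1) ->
  forall k, i <= k -> glue rho m f k.+1 \in delta A (glue rho m f k) (alpha k).
Proof.
move=> Hr Pm Hf k Hik.
case: (ltnP k m) => Hkm.
  rewrite (glue_le _ _ Hkm) (glue_le _ _ (ltnW Hkm)); apply: Hr; lia.
have -> : k = m + (k - m) by lia.
rewrite -addnS !glue_add /=.
by case: (Hf _ _ (itp_prop Pm Hf (k - m))).
Qed.

Lemma inV_succ (Q Sigma : finType) (A : buchi Q Sigma) (alpha : nat -> Sigma) x m y :
  complete A -> inV A alpha x m -> y \in delta A x (alpha m) -> inV A alpha y m.+1.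
Proof.
move=> Hc [rho [H0 [Hs Hm]]] Hy.
have [f Hf] := @mkchoice _ _ A alpha (fun _ _ => True)
  (fun x k _ => match set0Pn _ (Hc x (alpha k)) with ex_intro y Hy => ex_intro _ y (conj Hy I) end).
pose rho2 k := if k <= m then rho k else y.
exists (glue rho2 m.+1 f); split; first by rewrite glue_le // /rho2 leq0n.
split; last by rewrite glue_le // /rho2 ltnn.
move=> j; apply: (@glue_path _ _ A alpha (fun _ _ => True) f rho2 0 m.+1) => //.
  move=> k /andP[_ Hk]; rewrite /rho2.
  case: (ltnP k m) => Hkm.
    by rewrite (ltnW Hkm); apply: Hs.
  have -> : k = m by lia.
  by rewrite leqnn Hm.
Qed.

Definition win (Q Sigma : finType) (A : buchi Q Sigma) (s : dup_strategy Q Sigma) (p r : Q) : Prop :=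
  forall (ps : nat -> Q) (w : nat -> Sigma),
    ps 0 = p -> (forall i, ps i.+1 \in delta A (ps i) (w i)) ->
    forall i, ps i \in acc A -> exists k, i <= k /\ dup_play s r ps w k \in acc A.

Lemma win_shift (Q Sigma : finType) (A : buchi Q Sigma) s p r ps w m :
  ps 0 = p -> win A s p r -> (forall i, ps i.+1 \in delta A (ps i) (w i)) ->
  win A s (ps m) (dup_play s r ps w m).
Proof.
move=> H0 Hw Hs ps' w' H0' Hs' i' Ha.
pose ps2 k := if k < m then ps k else ps' (k - m).
pose w2 k := if k < m then w k else w' (k - m).
have Hpre : forall k, k <= m -> dup_play s r ps2 w2 k = dup_play s r ps w k.
  elim=> [|k IH] Hk //=.
  rewrite IH; last exact: ltnW.
  rewrite /ps2 /w2 Hk.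
  case: (ltnP k.+1 m) => Hk1 //.
  have -> : k.+1 = m by lia.
  by rewrite subnn H0'.
have Hsuf : forall d, dup_play s r ps2 w2 (m + d) = dup_play s (dup_play s r ps w m) ps' w' d.
  elim=> [|d IH]; first by rewrite addn0 Hpre.
  rewrite addnS /= IH /ps2 /w2.
  have -> : (m + d < m) = false by lia.
  have -> : ((m + d).+1 < m) = false by lia.
  by rewrite -addnS !addKn.
have [k [Hk Hak]] : exists k, m + i' <= k /\ dup_play s r ps2 w2 k \in acc A.
  apply: (Hw ps2 w2).
  - rewrite /ps2; case: (posnP m) => Hm0 //=.
    by rewrite Hm0 subn0 H0' Hm0.
  - move=> k; rewrite /ps2 /w2.
    case: (ltnP k.+1 m) => Hk1.
      by rewrite (ltnW Hk1).
    case: (ltnP k m) => Hk.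
      have Em : m = k.+1 by lia.
      by rewrite Em subnn H0' Em; apply: Hs.
    have -> : k.+1 - m = (k - m).+1 by lia.
    exact: Hs'.
  - by rewrite /ps2 ltnNge leq_addr /= addKn.
exists (k - m); split; first by lia.
by rewrite -Hsuf subnKC //; lia.
Qed.

Lemma dup_path (Q Sigma : finType) (A : buchi Q Sigma) (alpha : nat -> Sigma)
  (S : vset Q) s p q i (pi : nat -> Q) :
  complete A -> valid_strategy A s -> win A s p q -> inV A alpha q i ->
  (forall i p q, delayed_sim A p q -> inV A alpha q i -> S p i -> S q i) ->
  pi i = p -> (forall k, i <= k -> pi k.+1 \in delta A (pi k) (alpha k)) ->
  forall d, (forall d', d' <= d -> S (pi (i + d')) (i + d')) ->
  reach A alpha S q i
    (dup_play s q (fun d => pi (i + d)) (fun d => alpha (i + d)) d) (i + d).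
Proof.
move=> Hc Hv Hw Hq HIH Hpi Hstep.
set ps := fun d => pi (i + d).
set w := fun d => alpha (i + d).
set r := dup_play s q ps w.
have Hps : forall d, ps d.+1 \in delta A (ps d) (w d).
  by move=> d; rewrite /ps /w addnS; apply: Hstep; lia.
have Hps0 : ps 0 = p by rewrite /ps addn0.
have Hr : forall d, r d.+1 \in delta A (r d) (alpha (i + d)).
  by move=> d; rewrite /r /=; apply: Hv; apply: Hps.
have HV : forall d, inV A alpha (r d) (i + d).
  elim=> [|d IH]; first by rewrite addn0.
  rewrite addnS; exact: inV_succ Hc IH (Hr d).
have HS : forall d, S (ps d) (i + d) -> S (r d) (i + d).
  move=> d Hd; apply: (HIH _ (ps d)) => //.
  exists s; split => //; exact: win_shift Hps0 Hw Hps.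
move=> d Hd; split; first exact: leq_addr.
exists (fun k => r (k - i)); split; first by rewrite subnn.
split; first by rewrite addKn.
split.
  move=> k /andP[H1 H2].
  have E : k = i + (k - i) by lia.
  rewrite {2}E; apply: HS; apply: Hd; lia.
move=> k /andP[H1 H2].
have -> : k.+1 - i = (k - i).+1 by lia.
by have := Hr (k - i); rewrite subnKC.
Qed.

Lemma choice_true (Q Sigma : finType) (A : buchi Q Sigma) (alpha : nat -> Sigma) :
  complete A -> exists f : Q -> nat -> Q, forall x k, True ->
    f x k \in delta A x (alpha k) /\ True.
Proof.
move=> Hc; apply: (@mkchoice _ _ A alpha (fun _ _ => True)) => x k _.
by case: (set0Pn _ (Hc x (alpha k))) => y Hy; exists y.
Qed.

Lemma maxsnd (Q : finType) (l : seq (Q * nat)) a j :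
  (a, j) \in l -> j <= foldr maxn 0 (map snd l).
Proof.
elim: l => //= [[b k] l IH]; rewrite in_cons => /orP[/eqP [_ ->]|H].
  exact: leq_maxl.
exact: leq_trans (IH H) (leq_maxr _ _).
Qed.

Lemma fin_transfer (Q Sigma : finType) (A : buchi Q Sigma) (alpha : nat -> Sigma)
  (S : vset Q) p q i :
  complete A -> (forall i p q, delayed_sim A p q -> inV A alpha q i -> S p i -> S q i) ->
  delayed_sim A p q -> inV A alpha q i -> S p i ->
  ~ finite_in A alpha S p i -> ~ finite_in A alpha S q i.
Proof.
move=> Hc HIH [s [Hv Hw]] Hq Sp Hnf [_ [l Hl]]; apply: Hnf; split => //.
exists [seq (x, j) | x <- enum Q, j <- iota 0 (foldr maxn 0 (map snd l)).+1].
move=> x j [Hij [rho [Hi [Hj [HS Hd]]]]].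
have [f Hf] := choice_true alpha Hc.
pose pi := glue rho j f.
have Hpi_le : forall k, k <= j -> pi k = rho k by move=> k Hk; exact: glue_le.
have Hstep : forall k, i <= k -> pi k.+1 \in delta A (pi k) (alpha k).
  exact: (@glue_path _ _ A alpha (fun _ _ => True) f rho i j Hd I Hf).
have := @dup_path _ _ A alpha S s p q i pi Hc Hv Hw Hq HIH _ Hstep (j - i).
rewrite subnKC // Hpi_le // => H.
have {H} := H Hi.
have H2 : forall d', d' <= j - i -> S (pi (i + d')) (i + d').
  by move=> d' Hd'; rewrite Hpi_le; [apply: HS; lia | lia].
move=> /(_ H2) /Hl /maxsnd Hjm.
apply: allpairs_f; first by rewrite mem_enum.
by rewrite mem_iota /=; lia.
Qed.

Lemma end_transfer (Q Sigma : finType) (A : buchi Q Sigma) (alpha : nat -> Sigma)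
  (S : vset Q) p q i :
  complete A -> (forall i p q, delayed_sim A p q -> inV A alpha q i -> S p i -> S q i) ->
  (forall x k, S x k -> exists y, y \in delta A x (alpha k) /\ S y k.+1) ->
  delayed_sim A p q -> inV A alpha q i -> S p i ->
  ~ endangered_in A alpha S p i -> ~ endangered_in A alpha S q i.
Proof.
move=> Hc HIH Hsucc [s [Hv Hw]] Hq Sp Hne [_ Hqe].
have [x [j [[Hij [rho [Hi [Hj [HS Hd]]]]] Hacc]]] :
    exists q' j, reach A alpha S p i q' j /\ q' \in acc A.
  by apply: NNPP => HE; apply: Hne; split.
have [f Hf] := @mkchoice _ _ A alpha S Hsucc.
pose pi := glue rho j f.
have Hpi_le : forall k, k <= j -> pi k = rho k by move=> k Hk; exact: glue_le.
have Sj : S (rho j) j by apply: HS; rewrite Hij leqnn.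
have Hstep : forall k, i <= k -> pi k.+1 \in delta A (pi k) (alpha k).
  exact: (@glue_path _ _ A alpha S f rho i j Hd Sj Hf).
have HSall : forall k, i <= k -> S (pi k) k.
  move=> k Hk; case: (leqP k j) => Hkj.
    rewrite Hpi_le //; apply: HS; lia.
  apply: (@glue_P _ _ A alpha S f rho j Sj Hf); lia.
have Hps0 : (fun d => pi (i + d)) 0 = p by rewrite /= addn0 Hpi_le.
have Hps : forall d, (fun d => pi (i + d)) d.+1 \in
    delta A ((fun d => pi (i + d)) d) ((fun d => alpha (i + d)) d).
  by move=> d /=; rewrite addnS; apply: Hstep; lia.
have Hax : (fun d => pi (i + d)) (j - i) \in acc A.
  by rewrite /= subnKC // Hpi_le // Hj.
have [d [Hd1 Hd2]] := Hw _ _ Hps0 Hps (j - i) Hax.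
apply: Hqe; exists (dup_play s q (fun d => pi (i + d)) (fun d => alpha (i + d)) d), (i + d).
split => //.
apply: (@dup_path _ _ A alpha S s p q i pi Hc Hv Hw Hq HIH) => //.
  by rewrite Hpi_le.
by move=> d' _; apply: HSall; exact: leq_addr.
Qed.

Lemma succ_nonfinite (Q Sigma : finType) (A : buchi Q Sigma) (alpha : nat -> Sigma)
  (S : vset Q) x k :
  S x k -> ~ finite_in A alpha S x k ->
  exists y, y \in delta A x (alpha k) /\ S y k.+1 /\ ~ finite_in A alpha S y k.+1.
Proof.
move=> Sx Hnf; apply: NNPP => H; apply: Hnf; split => //.
have g : forall y, exists l : seq (Q * nat),
    (y \in delta A x (alpha k) /\ S y k.+1) ->
    forall q' j, reach A alpha S y k.+1 q' j -> (q', j) \in l.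
  move=> y; case: (classic (y \in delta A x (alpha k) /\ S y k.+1)) => [[Hy Sy]|Hn];
    last by exists [::].
  have Hf : finite_in A alpha S y k.+1 by apply: NNPP => Hf; apply: H; exists y.
  by case: Hf => _ [l Hl]; exists l.
pose L y := proj1_sig (constructive_indefinite_description _ (g y)).
exists ((x, k) :: flatten [seq L y | y <- enum Q]).
move=> q' j [Hkj [rho [H0 [H1 [HS Hd]]]]].
case: (eqVneq j k) => [Ejk|Njk].
  by subst j; rewrite in_cons -H1 H0 eqxx.
rewrite in_cons; apply/orP; right; apply/flatten_mapP; exists (rho k.+1).
  by rewrite mem_enum.
apply: (proj2_sig (constructive_indefinite_description _ (g (rho k.+1)))).
  split; first by have := Hd k; rewrite H0; apply; lia.
  by apply: HS; lia.
split; first by lia.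
exists rho; split => //; split => //; split.
  by move=> k' H'; apply: HS; lia.
by move=> k' H'; apply: Hd; lia.
Qed.

Lemma transfer (Q Sigma : finType) (A : buchi Q Sigma) (alpha : nat -> Sigma) :
  complete A -> forall j i p q, delayed_sim A p q -> inV A alpha q i ->
  Gsub A alpha j p i -> Gsub A alpha j q i.
Proof.
move=> Hc; elim=> [|j IH] i p q Hd Hq //=.
move=> [Hp Hn]; have Hqj := IH _ _ _ Hd Hq Hp; split => //.
case Ho: (odd j) in Hn *.
  case: j Ho IH Hp Hn Hqj => [|j'] // Ho IH Hp Hn Hqj.
  apply: (end_transfer Hc IH _ Hd Hq Hp Hn).
  move=> x k /= [Hx Hnx].
  have He : odd j' = false by move: Ho => /=; case: (odd j').
  rewrite He in Hnx.
  have [y [Hy [Sy Hny]]] := succ_nonfinite Hx Hnx.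
  by exists y; split => //=; rewrite He.
exact: (fin_transfer Hc IH Hd Hq Hp Hn).
Qed.

Lemma Gsub_mono (Q Sigma : finType) (A : buchi Q Sigma) (alpha : nat -> Sigma) a b x i :
  a <= b -> Gsub A alpha b x i -> Gsub A alpha a x i.
Proof.
elim: b => [|b IH] Hab; first by rewrite leqn0 in Hab; move/eqP: Hab => ->.
case: (eqVneq a b.+1) => [-> //|Hne] /= [H _].
apply: IH H; lia.
Qed.

Theorem lemma6 (Q Sigma : finType) (A : buchi Q Sigma) (p q : Q)
    (alpha : nat -> Sigma) :
  complete A ->
  delayed_sim A p q ->
  forall (i : nat) (rp rq : option nat),
    inV A alpha p i -> inV A alpha q i ->
    is_rank A alpha p i rp -> is_rank A alpha q i rq ->
    rank_le rp (ceil_even rq).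
Proof.
move=> Hc Hd i rp rq Hp Hq Rp Rq.
case: rq Rq => [y|] Rq; last by case: rp Rp.
case: Rq => [Hy [Gq Nq]].
have key : ~ Gsub A alpha y.+1 p i.
  by move=> G; apply: Nq; exact: (transfer Hc Hd Hq G).
case: rp Rp => [x|] /= Rp.
  case: Rp => [_ [Gx _]].
  have Hxy : x <= y.
    rewrite leqNgt; apply/negP => Hlt; apply: key; exact: Gsub_mono Hlt Gx.
  case: (odd y) => //; exact: leqW.
apply: key.
have : forall j, j <= y.+1 -> Gsub A alpha j p i.
  elim=> [|j IH] Hj //=.
  have Gj := IH (ltnW Hj).
  apply: NNPP => Hn; apply: (Rp j); first by rewrite ltnS in Hj; exact: leq_ltn_trans Hj Hy.
  by split.
by apply.
Qed.
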